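(* $F_{\{1,2\}}=\emptyset$, and $\overline{F}_{\{1,2\}}$ consists of a single point, namely $\overline{F}_{\{1,2\}}=F_{\{1,2,3,5,10,11\}}=\{p_2\}$, where $p_2$ is the unique fixed point of $G_2$ in $H^2_\mathbb{C}$.
   Context: Hermitian form on $\mathbb{C}^3$: $\langle V,W\rangle=V_1\overline{W_3}+V_2\overline{W_2}+V_3\overline{W_1}$. Let $$G_1=\begin{pmatrix}1&1&-\frac{1+i\sqrt7}{2}\\0&1&-1\\0&0&1\end{pmatrix},\quad G_3=\begin{pmatrix}1&0&0\\-1&1&0\\ \frac{-1+i\sqrt7}{2}&1&1\end{pmatrix},\quad G_2=G_3G_1^{-1}G_3^{-1}G_1,$$ $Q=(1,0,0)^T$. Set $\gamma_1=G_2,\gamma_2=G_2^{-1},\gamma_3=G_3,\gamma_4=G_3^{-1}$ and, for $k\ge1$ and $1\le j\le4$, $\gamma_{8k-4+j}=G_1^k\gamma_jG_1^{-k}$, $\gamma_{8k+j}=G_1^{-k}\gamma_jG_1^{k}$. For $Z\in\mathbb{C}^3\setminus\{0\}$ let $f_0(Z)=\langle Z,Z\rangle$ and $f_j(Z)=|\langle Z,Q\rangle|^2-|\langle Z,\gamma_jQ\rangle|^2$ for $j\ge1$ (homogeneous, so their signs are defined on $\mathbb{C}P^2$). Let $I=\{0,1,2,\dots\}$. For disjoint $J,K\subset I$, $F_{J,K}=\{[Z]\in\mathbb{C}P^2: f_j(Z)=0\ \forall j\in J,\ f_i(Z)<0\ \forall i\in K\}$, $\overline{F}_{J,K}$ is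 defined likewise with $f_i\le0$ for $i\in K$, $F_J=F_{J,I\setminus J}$ and $\overline{F}_J=\overline{F}_{J,I\setminus J}$. *)

(* Defs.v *)
From Stdlib Require Import Reals Lra Lia Arith.
Open Scope R_scope.

Record C := mkC { re : R; im : R }.
Definition C0 : C := mkC 0 0.
Definition C1 : C := mkC 1 0.
Definition Cadd (z w : C) : C := mkC (re z + re w) (im z + im w).
Definition Copp (z : C) : C := mkC (- re z) (- im z).
Definition Cmul (z w : C) : C :=
  mkC (re z * re w - im z * im w) (re z * im w + im z * re w).
Definition Cconj (z : C) : C := mkC (re z) (- im z).
Definition Cnorm2 (z : C) : R := re z * re z + im z * im z.

Record V3 := mkV { x1 : C; x2 : C; x3 : C }.
Definition Vscale (l : C) (Z : V3) : V3 :=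
  mkV (Cmul l (x1 Z)) (Cmul l (x2 Z)) (Cmul l (x3 Z)).
Definition Vnonzero (Z : V3) : Prop := ~ (x1 Z = C0 /\ x2 Z = C0 /\ x3 Z = C0).

Record M3 := mkM { a11 : C; a12 : C; a13 : C;
                   a21 : C; a22 : C; a23 : C;
                   a31 : C; a32 : C; a33 : C }.
Definition Cadd3 (a b c : C) : C := Cadd a (Cadd b c).
Definition Mmul (A B : M3) : M3 :=
  mkM (Cadd3 (Cmul (a11 A) (a11 B)) (Cmul (a12 A) (a21 B)) (Cmul (a13 A) (a31 B)))
      (Cadd3 (Cmul (a11 A) (a12 B)) (Cmul (a12 A) (a22 B)) (Cmul (a13 A) (a32 B)))
      (Cadd3 (Cmul (a11 A) (a13 B)) (Cmul (a12 A) (a23 B)) (Cmul (a13 A) (a33 B)))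
      (Cadd3 (Cmul (a21 A) (a11 B)) (Cmul (a22 A) (a21 B)) (Cmul (a23 A) (a31 B)))
      (Cadd3 (Cmul (a21 A) (a12 B)) (Cmul (a22 A) (a22 B)) (Cmul (a23 A) (a32 B)))
      (Cadd3 (Cmul (a21 A) (a13 B)) (Cmul (a22 A) (a23 B)) (Cmul (a23 A) (a33 B)))
      (Cadd3 (Cmul (a31 A) (a11 B)) (Cmul (a32 A) (a21 B)) (Cmul (a33 A) (a31 B)))
      (Cadd3 (Cmul (a31 A) (a12 B)) (Cmul (a32 A) (a22 B)) (Cmul (a33 A) (a32 B)))
      (Cadd3 (Cmul (a31 A) (a13 B)) (Cmul (a32 A) (a23 B)) (Cmul (a33 A) (a33 B))).
Definition Mapp (A : M3) (Z : V3) : V3 :=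
  mkV (Cadd3 (Cmul (a11 A) (x1 Z)) (Cmul (a12 A) (x2 Z)) (Cmul (a13 A) (x3 Z)))
      (Cadd3 (Cmul (a21 A) (x1 Z)) (Cmul (a22 A) (x2 Z)) (Cmul (a23 A) (x3 Z)))
      (Cadd3 (Cmul (a31 A) (x1 Z)) (Cmul (a32 A) (x2 Z)) (Cmul (a33 A) (x3 Z))).
Definition Mid : M3 := mkM C1 C0 C0 C0 C1 C0 C0 C0 C1.
Fixpoint Mpow (A : M3) (k : nat) : M3 :=
  match k with O => Mid | S k' => Mmul A (Mpow A k') end.

Definition herm (V W : V3) : C :=
  Cadd3 (Cmul (x1 V) (Cconj (x3 W))) (Cmul (x2 V) (Cconj (x2 W)))
        (Cmul (x3 V) (Cconj (x1 W))).

Definition s7 : R := sqrt 7.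
Definition cA : C := mkC (- (1/2)) (- (s7 / 2)).
Definition cB : C := mkC (- (1/2)) (s7 / 2).
Definition cBbar : C := mkC (- (1/2)) (- (s7 / 2)).
Definition Cm1 : C := Copp C1.

Definition G1 : M3 := mkM C1 C1 cA  C0 C1 Cm1  C0 C0 C1.
Definition G3 : M3 := mkM C1 C0 C0  Cm1 C1 C0  cB C1 C1.
Definition G1inv : M3 := mkM C1 Cm1 cB  C0 C1 C1  C0 C0 C1.
Definition G3inv : M3 := mkM C1 C0 C0  C1 C1 C0  cBbar Cm1 C1.

Definition G2 : M3 := Mmul G3 (Mmul G1inv (Mmul G3inv G1)).
Definition G2inv : M3 := Mmul G1inv (Mmul G3 (Mmul G1 G3inv)).

Definition Q : V3 := mkV C1 C0 C0.

Definition gbase (r : nat) : M3 :=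
  match r with 0%nat => G2 | 1%nat => G2inv | 2%nat => G3 | _ => G3inv end.

(* gamma_n for n >= 1: write n - 1 = 4 q + r (0 <= r < 4), j = r + 1.
   q = 0        : gamma_n = gamma_j
   q = 2k - 1   : n = 8k-4+j,  gamma_n = G1^k gamma_j G1^{-k}
   q = 2k (k>=1): n = 8k+j,    gamma_n = G1^{-k} gamma_j G1^k      *)
Definition gamma (n : nat) : M3 :=
  let m := (n - 1)%nat in
  let q := (m / 4)%nat in
  let r := (m mod 4)%nat in
  match q with
  | O => gbase r
  | _ => if Nat.odd q
         then let k := ((q + 1) / 2)%nat in
              Mmul (Mpow G1 k) (Mmul (gbase r) (Mpow G1inv k))
         else let k := (q / 2)%nat in
              Mmul (Mpow G1inv k) (Mmul (gbase r) (Mpow G1 k))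
  end.

(* f_0(Z) = <Z,Z>, which is real; we take its real part. *)
Definition fj (j : nat) (Z : V3) : R :=
  match j with
  | O => re (herm Z Z)
  | _ => Cnorm2 (herm Z Q) - Cnorm2 (herm Z (Mapp (gamma j) Q))
  end.

(* ---------- the sets F_{J,K}, Fbar_{J,K}, F_J, Fbar_J ----------
   Points of CP^2 are represented by nonzero vectors of C^3; all conditions
   are invariant under nonzero rescaling. *)
Definition F_JK (J K : nat -> Prop) (Z : V3) : Prop :=
  Vnonzero Z /\ (forall j, J j -> fj j Z = 0) /\ (forall i, K i -> fj i Z < 0).
Definition Fbar_JK (J K : nat -> Prop) (Z : V3) : Prop :=
  Vnonzero Z /\ (forall j, J j -> fj j Z = 0) /\ (forall i, K i -> fj i Z <= 0).
Definition compl (J : nat -> Prop) : nat -> Prop := fun i => ~ J i.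
Definition F_ (J : nat -> Prop) : V3 -> Prop := F_JK J (compl J).
Definition Fbar_ (J : nat -> Prop) : V3 -> Prop := Fbar_JK J (compl J).

Definition proj_eq (Z W : V3) : Prop := exists c : C, c <> C0 /\ W = Vscale c Z.
Definition proj_fixed (A : M3) (Z : V3) : Prop := exists l : C, Mapp A Z = Vscale l Z.

Definition J12 : nat -> Prop := fun j => j = 1%nat \/ j = 2%nat.
Definition J123_5_10_11 : nat -> Prop :=
  fun j => j = 1%nat \/ j = 2%nat \/ j = 3%nat \/ j = 5%nat \/ j = 10%nat \/ j = 11%nat.

Lemma C_ext (z w : C) : re z = re w -> im z = im w -> z = w.
Proof. destruct z, w; simpl; intros; subst; reflexivity. Qed.

Ltac mat_ring :=
  repeat match goal with |- mkM _ _ _ _ _ _ _ _ _ = _ => f_equal end;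
  apply C_ext; simpl; ring.

Lemma G1_G1inv : Mmul G1 G1inv = Mid.
Proof. unfold Mmul, Mid, G1, G1inv; simpl; f_equal; apply C_ext; unfold cA, cB; simpl; field. Qed.
Lemma G1inv_G1 : Mmul G1inv G1 = Mid.
Proof. unfold Mmul, Mid, G1, G1inv; simpl; f_equal; apply C_ext; unfold cA, cB; simpl; field. Qed.
Lemma G3_G3inv : Mmul G3 G3inv = Mid.
Proof. unfold Mmul, Mid, G3, G3inv; simpl; f_equal; apply C_ext; unfold cBbar, cB; simpl; field. Qed.
Lemma G3inv_G3 : Mmul G3inv G3 = Mid.
Proof. unfold Mmul, Mid, G3, G3inv; simpl; f_equal; apply C_ext; unfold cBbar, cB; simpl; field. Qed.

Lemma gamma_low (j : nat) : (1 <= j <= 4)%nat -> gamma j = gbase (j - 1).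
Proof. intros H; destruct j as [|[|[|[|[|j]]]]]; try lia; reflexivity. Qed.

Lemma gamma_8km4 (k j : nat) : (1 <= k)%nat -> (1 <= j <= 4)%nat ->
  gamma (8 * k - 4 + j) = Mmul (Mpow G1 k) (Mmul (gbase (j - 1)) (Mpow G1inv k)).
Proof.
  intros Hk Hj. unfold gamma.
  assert (Hq : ((8 * k - 4 + j - 1) / 4 = 2 * k - 1)%nat).
  { symmetry; apply Nat.div_unique with (j - 1)%nat; lia. }
  assert (Hr : ((8 * k - 4 + j - 1) mod 4 = j - 1)%nat).
  { symmetry; apply Nat.mod_unique with (2 * k - 1)%nat; lia. }
  rewrite Hq, Hr.
  replace (2 * k - 1)%nat with (S (2 * (k - 1)))%nat by lia.
  cbv beta iota zeta.
  replace ((S (2 * (k - 1)) + 1) / 2)%nat with k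
    by (apply Nat.div_unique with 0%nat; lia).
  rewrite Nat.odd_succ, Nat.even_mul. change (Nat.even 2) with true. cbn [orb].
  reflexivity.
Qed.

Lemma gamma_8k (k j : nat) : (1 <= k)%nat -> (1 <= j <= 4)%nat ->
  gamma (8 * k + j) = Mmul (Mpow G1inv k) (Mmul (gbase (j - 1)) (Mpow G1 k)).
Proof.
  intros Hk Hj. unfold gamma.
  assert (Hq : ((8 * k + j - 1) / 4 = 2 * k)%nat).
  { symmetry; apply Nat.div_unique with (j - 1)%nat; lia. }
  assert (Hr : ((8 * k + j - 1) mod 4 = j - 1)%nat).
  { symmetry; apply Nat.mod_unique with (2 * k)%nat; lia. }
  rewrite Hq, Hr.
  replace (2 * k)%nat with (S (2 * (k - 1) + 1))%nat by lia.
  cbv beta iota zeta.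
  replace ((S (2 * (k - 1) + 1)) / 2)%nat with k
    by (apply Nat.div_unique with 0%nat; lia).
  rewrite Nat.odd_succ, Nat.add_comm, Nat.even_add_mul_2. cbn [Nat.even].
  reflexivity.
Qed.

(* Main.v *)
Require Import Defs.
From Stdlib Require Import Reals.
Open Scope R_scope.
From Stdlib Require Import Lra Psatz Lia Arith Ring Field Classical.
Import Defs.

Lemma s7_sq : s7 * s7 = 7.
Proof. unfold s7. apply sqrt_sqrt. lra. Qed.
Lemma s7_pos : 0 < s7.
Proof. unfold s7. apply sqrt_lt_R0. lra. Qed.
Lemma s7_2 : s7 ^ 2 = 7.
Proof. rewrite <- s7_sq. ring. Qed.
Lemma s7_3 : s7 ^ 3 = 7 * s7.
Proof. rewrite <- s7_sq. ring. Qed.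
Lemma s7_4 : s7 ^ 4 = 49.
Proof. replace 49 with (7*7) by ring. rewrite <- s7_sq. ring. Qed.
Lemma s7_5 : s7 ^ 5 = 49 * s7.
Proof. replace 49 with (7*7) by ring. rewrite <- s7_sq. ring. Qed.
Lemma s7_6 : s7 ^ 6 = 343.
Proof. replace 343 with (7*7*7) by ring. rewrite <- s7_sq. ring. Qed.

Ltac s7ring := first [ ring | (ring_simplify; rewrite ?s7_6, ?s7_5, ?s7_4, ?s7_3, ?s7_2; ring) | (field_simplify; rewrite ?s7_6, ?s7_5, ?s7_4, ?s7_3, ?s7_2; field) ].

Definition Csub (z w : Defs.C) : Defs.C := Cadd z (Copp w).
Lemma Cring : ring_theory C0 C1 Cadd Cmul Csub Copp (@eq Defs.C).
Proof.
  constructor; intros; repeat match goal with z : Defs.C |- _ => destruct z end;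
  unfold Cadd, Cmul, Csub, Copp, C0, C1; simpl; apply C_ext; simpl; ring.
Qed.
Add Ring Cring : Cring.

Lemma C_ext_iff (z w : Defs.C) : z = w <-> re z = re w /\ im z = im w.
Proof. split; [intros ->; auto | intros [? ?]; apply C_ext; auto]. Qed.

Lemma Cmul_eq0 (z w : Defs.C) : Cmul z w = C0 -> z = C0 \/ w = C0.
Proof.
  destruct z as [a b], w as [c d]; unfold Cmul, C0; simpl; intros H.
  injection H as H1 H2.
  destruct (Req_dec (a*a+b*b) 0) as [E|E].
  - left. assert (a = 0) by nra. assert (b = 0) by nra. apply C_ext; simpl; auto.
  - right. apply C_ext; simpl.
    + assert (Hc : (a*a+b*b)*c = a*(a*c-b*d) + b*(a*d+b*c)) by ring.
      rewrite H1, H2, Rmult_0_r, Rmult_0_r in Hc. rewrite ?Rplus_0_r, ?Rminus_0_r in Hc. apply Rmult_integral in Hc. lra.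
    + assert (Hc : (a*a+b*b)*d = a*(a*d+b*c) - b*(a*c-b*d)) by ring.
      rewrite H1, H2, Rmult_0_r, Rmult_0_r in Hc. rewrite ?Rplus_0_r, ?Rminus_0_r in Hc. apply Rmult_integral in Hc. lra.
Qed.

Lemma Mapp_Mmul (A B : M3) (Z : V3) : Mapp (Mmul A B) Z = Mapp A (Mapp B Z).
Proof.
  destruct A, B, Z. unfold Mapp, Mmul, Cadd3; simpl. f_equal; ring.
Qed.
Definition Rs (r : R) (z : Defs.C) : Defs.C := mkC (r * re z) (r * im z).
Definition G1m (m : R) (W : V3) : V3 :=
  mkV (Cadd (Cadd (x1 W) (Rs m (x2 W))) (Cadd (Rs m (Cmul cA (x3 W))) (Rs (-(m*(m-1)/2)) (x3 W))))
      (Cadd (x2 W) (Rs (-m) (x3 W)))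
      (x3 W).

Lemma G1m_step (m : R) (W : V3) : Mapp G1 (G1m m W) = G1m (m+1) W.
Proof.
  destruct W as [[] [] []]. unfold Mapp, G1m, G1, Rs, Cadd3, Cadd, Cmul, cA, C0, C1, Cm1, Copp; simpl.
  f_equal; apply C_ext; simpl; field.
Qed.
Lemma G1inv_step (m : R) (W : V3) : Mapp G1inv (G1m m W) = G1m (m-1) W.
Proof.
  destruct W as [[] [] []]. unfold Mapp, G1m, G1inv, Rs, Cadd3, Cadd, Cmul, cA, cB, C0, C1, Cm1, Copp; simpl.
  f_equal; apply C_ext; simpl; field.
Qed.
Lemma G1m_0 (W : V3) : G1m 0 W = W.
Proof.
  destruct W as [[] [] []]. unfold G1m, Rs, Cadd, Cmul, cA; simpl.
  f_equal; apply C_ext; simpl; field.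
Qed.
Lemma Mpow_G1 (k : nat) (W : V3) : Mapp (Mpow G1 k) W = G1m (INR k) W.
Proof.
  induction k.
  - simpl. rewrite G1m_0. destruct W as [[] [] []]; unfold Mapp, Mid, Cadd3, Cadd, Cmul, C0, C1; simpl.
    f_equal; apply C_ext; simpl; ring.
  - simpl Mpow. rewrite Mapp_Mmul, IHk, G1m_step, S_INR. reflexivity.
Qed.
Lemma Mpow_G1inv (k : nat) (W : V3) : Mapp (Mpow G1inv k) W = G1m (- INR k) W.
Proof.
  induction k.
  - simpl. replace (-0) with 0 by ring. rewrite G1m_0. destruct W as [[] [] []]; unfold Mapp, Mid, Cadd3, Cadd, Cmul, C0, C1; simpl.
    f_equal; apply C_ext; simpl; ring.
  - simpl Mpow. rewrite Mapp_Mmul, IHk, G1inv_step, S_INR. f_equal. ring.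
Qed.
Lemma G1m_Q (m : R) : G1m m Q = Q.
Proof. unfold G1m, Q, Rs, Cadd, Cmul, cA, C0, C1; simpl. f_equal; apply C_ext; simpl; ring. Qed.

Lemma n_cases (n : nat) : (1 <= n)%nat ->
  (1 <= n <= 4)%nat \/
  (exists k j, (1 <= k)%nat /\ (1 <= j <= 4)%nat /\ n = (8*k-4+j)%nat) \/
  (exists k j, (1 <= k)%nat /\ (1 <= j <= 4)%nat /\ n = (8*k+j)%nat).
Proof.
  intros Hn.
  set (a := ((n-1)/8)%nat). set (b := ((n-1) mod 8)%nat).
  assert (Hd : (n - 1 = 8*a + b)%nat) by (apply Nat.div_mod; lia).
  assert (Hb : (b < 8)%nat) by (apply Nat.mod_upper_bound; lia).
  clearbody a b.
  destruct (Nat.lt_ge_cases b 4).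
  - destruct a.
    + left. lia.
    + right; right. exists (S a), (b+1)%nat. lia.
  - right; left. exists (S a), (b-3)%nat. lia.
Qed.

Lemma gamma_Q (n : nat) : (1 <= n)%nat ->
  (1 <= n <= 4)%nat /\ Mapp (gamma n) Q = G1m 0 (Mapp (gbase (n-1)) Q) \/
  (exists k j, (1 <= k)%nat /\ (1 <= j <= 4)%nat /\ n = (8*k-4+j)%nat /\
      Mapp (gamma n) Q = G1m (INR k) (Mapp (gbase (j-1)) Q)) \/
  (exists k j, (1 <= k)%nat /\ (1 <= j <= 4)%nat /\ n = (8*k+j)%nat /\
      Mapp (gamma n) Q = G1m (- INR k) (Mapp (gbase (j-1)) Q)).
Proof.
  intros Hn. destruct (n_cases n Hn) as [H|[[k [j [Hk [Hj E]]]]|[k [j [Hk [Hj E]]]]]].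
  - left. split; auto. rewrite gamma_low by auto. rewrite G1m_0. reflexivity.
  - right; left. exists k, j. repeat split; auto; try lia.
    rewrite E, gamma_8km4 by auto. rewrite !Mapp_Mmul, Mpow_G1inv, G1m_Q, Mpow_G1. reflexivity.
  - right; right. exists k, j. repeat split; auto; try lia.
    rewrite E, gamma_8k by auto. rewrite !Mapp_Mmul, Mpow_G1, G1m_Q, Mpow_G1inv. reflexivity.
Qed.

Ltac mexp := unfold Mapp, G1, G1inv, G3, G3inv, Q, Cadd3, Cadd, Cmul, cA, cB, cBbar, C0, C1, Cm1, Copp; simpl;
  f_equal; try apply C_ext; simpl; s7ring.

Lemma G2Q : Mapp G2 Q = mkV (mkC 2 0) (mkC (-3/2) (-(s7/2))) (mkC (-1) 0).
Proof.
  unfold G2. rewrite !Mapp_Mmul.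
  replace (Mapp G1 Q) with Q by mexp.
  replace (Mapp G3inv Q) with (mkV C1 C1 cBbar) by mexp.
  replace (Mapp G1inv (mkV C1 C1 cBbar)) with (mkV (mkC 2 0) (mkC (1/2) (-(s7/2))) cBbar) by mexp.
  mexp.
Qed.
Lemma G2invQ : Mapp G2inv Q = mkV C0 C0 (mkC (-1) 0).
Proof.
  unfold G2inv. rewrite !Mapp_Mmul.
  replace (Mapp G3inv Q) with (mkV C1 C1 cBbar) by mexp.
  replace (Mapp G1 (mkV C1 C1 cBbar)) with (mkV (mkC (1/2) (s7/2)) (mkC (3/2) (s7/2)) cBbar) by mexp.
  replace (Mapp G3 (mkV (mkC (1/2) (s7/2)) (mkC (3/2) (s7/2)) cBbar)) with (mkV (mkC (1/2) (s7/2)) (mkC 1 0) (mkC (-1) 0)) by mexp.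
  mexp.
Qed.
Lemma G3Q : Mapp G3 Q = mkV C1 Cm1 cB.
Proof. mexp. Qed.
Lemma G3invQ : Mapp G3inv Q = mkV C1 C1 cBbar.
Proof. mexp. Qed.

Definition P2 : V3 := mkV (mkC 2 0) (mkC (-3/2) (-(s7/2))) (mkC (-2) 0).
Ltac hexp := unfold Cnorm2, herm, G1m, Rs, P2, Cadd3, Cadd, Cmul, Cconj, cA, cB, cBbar, C0, C1, Cm1, Copp; simpl.

Lemma g0 (m : R) : Cnorm2 (herm P2 (G1m m (Mapp G2 Q))) = 4 + m*(m-1)*(m*m-2*m+6).
Proof. rewrite G2Q. hexp. s7ring. Qed.
Lemma g1 (m : R) : Cnorm2 (herm P2 (G1m m (Mapp G2inv Q))) = 4 + m*(m+1)*(m*m+2*m+6).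
Proof. rewrite G2invQ. hexp. s7ring. Qed.
Lemma g2 (m : R) : Cnorm2 (herm P2 (G1m m (Mapp G3 Q))) = 4 + m*(m+1)*(2*m*m+2*m+5).
Proof. rewrite G3Q. hexp. s7ring. Qed.
Lemma g3 (m : R) : Cnorm2 (herm P2 (G1m m (Mapp G3inv Q))) = 22+16*m+16*m*m+8*m*m*m+2*m*m*m*m.
Proof. rewrite G3invQ. hexp. s7ring. Qed.
Lemma hP2Q : Cnorm2 (herm P2 Q) = 4.
Proof. unfold Q. hexp. ring. Qed.

Lemma fj_S (n : nat) (Z : V3) :
  fj (S n) Z = Cnorm2 (herm Z Q) - Cnorm2 (herm Z (Mapp (gamma (S n)) Q)).
Proof. reflexivity. Qed.

Lemma fj_pos (n : nat) (Z : V3) : (1 <= n)%nat ->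
  fj n Z = Cnorm2 (herm Z Q) - Cnorm2 (herm Z (Mapp (gamma n) Q)).
Proof. intros H. destruct n; [lia|]. apply fj_S. Qed.

Lemma fjP2_0 : fj 0 P2 = -4.
Proof. unfold fj, herm, P2, Cadd3, Cadd, Cmul, Cconj; simpl. s7ring. Qed.

Lemma gpos1 (x : R) : 1 <= x -> 0 < x*(x+1)*(x*x+2*x+6).
Proof. intros. assert (0 < x*(x+1)) by nra. assert (0 < x*x+2*x+6) by nra. nra. Qed.
Lemma gpos2 (x : R) : 2 <= x -> 0 < x*(x-1)*(x*x-2*x+6).
Proof. intros. assert (0 < x*(x-1)) by nra. assert (0 < x*x-2*x+6) by nra. nra. Qed.
Lemma gpos3 (x : R) : 1 <= x -> 0 < x*(x+1)*(2*x*x+2*x+5).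
Proof. intros. assert (0 < x*(x+1)) by nra. assert (0 < 2*x*x+2*x+5) by nra. nra. Qed.
Lemma gpos4 (x : R) : 2 <= x -> 0 < x*(x-1)*(2*x*x-2*x+5).
Proof. intros. assert (0 < x*(x-1)) by nra. assert (0 < 2*x*x-2*x+5) by nra. nra. Qed.
Lemma gpos5 (x : R) : 4 < 22+16*x+16*x*x+8*x*x*x+2*x*x*x*x.
Proof.
  assert (E : 22+16*x+16*x*x+8*x*x*x+2*x*x*x*x = 2*((x*x+2*x+2)*(x*x+2*x+2)) + 14) by ring.
  rewrite E. assert (Hq : 1 <= x*x+2*x+2) by (pose proof (Rle_0_sqr (x+1)); unfold Rsqr in *; nra). set (q := x*x+2*x+2) in *. nra.
Qed.

Lemma fjP2_cases (n : nat) :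
  (J123_5_10_11 n /\ fj n P2 = 0) \/ (~ J123_5_10_11 n /\ fj n P2 < 0).
Proof.
  unfold J123_5_10_11.
  destruct (Nat.eq_dec n 0) as [->|Hn0].
  { right. split; [lia|]. rewrite fjP2_0. lra. }
  assert (Hn : (1 <= n)%nat) by lia.
  rewrite (fj_pos n P2 Hn), hP2Q.
  destruct (gamma_Q n Hn) as [[Hl E]|[[k [j [Hk [Hj [En E]]]]]|[k [j [Hk [Hj [En E]]]]]]];
    rewrite E.
  - destruct n as [|[|[|[|[|n]]]]]; try lia; simpl gbase.
    + left. split; [lia|]. rewrite g0. ring.
    + left. split; [lia|]. rewrite g1. ring.
    + left. split; [lia|]. rewrite g2. ring.
    + right. split; [lia|]. rewrite g3. ring_simplify. lra.
  - assert (HK : 1 <= INR k) by (apply (le_INR 1); lia).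
    destruct (Nat.eq_dec k 1) as [->|Hk1].
    + simpl INR. destruct j as [|[|[|[|[|j]]]]]; try lia; simpl gbase.
      * left. split; [lia|]. rewrite g0. ring.
      * right. split; [lia|]. rewrite g1. pose proof (gpos1 1). lra.
      * right. split; [lia|]. rewrite g2. pose proof (gpos3 1). lra.
      * right. split; [lia|]. rewrite g3. pose proof (gpos5 1). lra.
    + assert (HK2 : 2 <= INR k) by (apply (le_INR 2); lia).
      right. split; [lia|].
      destruct j as [|[|[|[|[|j]]]]]; try lia; simpl gbase.
      * rewrite g0. pose proof (gpos2 _ HK2). lra.
      * rewrite g1. pose proof (gpos1 _ HK). lra.
      * rewrite g2. pose proof (gpos3 _ HK). lra.
      * rewrite g3. pose proof (gpos5 (INR k)) as G5. set (e := 22+16*INR k+16*INR k*INR k+8*INR k*INR k*INR k+2*INR k*INR k*INR k*INR k) in *. ring_simplify. lra.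
  - assert (HK : 1 <= INR k) by (apply (le_INR 1); lia).
    destruct (Nat.eq_dec k 1) as [->|Hk1].
    + simpl INR. destruct j as [|[|[|[|[|j]]]]]; try lia; simpl gbase.
      * right. split; [lia|]. rewrite g0. pose proof (gpos1 1). nra.
      * left. split; [lia|]. rewrite g1. ring.
      * left. split; [lia|]. rewrite g2. ring.
      * right. split; [lia|]. rewrite g3. pose proof (gpos5 (-1)). lra.
    + assert (HK2 : 2 <= INR k) by (apply (le_INR 2); lia).
      right. split; [lia|]. set (x := INR k) in *.
      destruct j as [|[|[|[|[|j]]]]]; try lia; simpl gbase.
      * rewrite g0. pose proof (gpos1 _ HK).
        replace (- x * (- x - 1) * (- x * - x - 2 * - x + 6)) with (x*(x+1)*(x*x+2*x+6)) by ring. lra.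
      * rewrite g1. pose proof (gpos2 _ HK2).
        replace (- x * (- x + 1) * (- x * - x + 2 * - x + 6)) with (x*(x-1)*(x*x-2*x+6)) by ring. lra.
      * rewrite g2. pose proof (gpos4 _ HK2).
        replace (- x * (- x + 1) * (2 * - x * - x + 2 * - x + 5)) with (x*(x-1)*(2*x*x-2*x+5)) by ring. lra.
      * rewrite g3. pose proof (gpos5 (-x)) as G5. set (e := 22 + 16 * - x + 16 * - x * - x + 8 * - x * - x * - x + 2 * - x * - x * - x * - x) in *. lra.
Qed.

Definition G2mat : M3 :=
  mkM (mkC 2 0) (mkC (3/2) (-1/2*s7)) (mkC (-1) 0)
      (mkC (-3/2) (-1/2*s7)) (mkC (-1) 0) (mkC 0 0)
      (mkC (-1) 0) (mkC 0 0) (mkC 0 0).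

Ltac mmexp := unfold Mmul, G1, G1inv, G3, G3inv, Cadd3, Cadd, Cmul, cA, cB, cBbar, C0, C1, Cm1, Copp; simpl;
  f_equal; try apply C_ext; simpl; try s7ring.

Definition M1 : M3 := (mkM (mkC (1) (0)) (mkC (1) (0)) (mkC (-1/2) (-1/2*s7)) (mkC (1) (0)) (mkC (2) (0)) (mkC (-3/2) (-1/2*s7)) (mkC (-1/2) (-1/2*s7)) (mkC (-3/2) (-1/2*s7)) (mkC (1/2) (1/2*s7))).
Definition M2 : M3 := (mkM (mkC (2) (0)) (mkC (3/2) (-1/2*s7)) (mkC (-1) (0)) (mkC (1/2) (-1/2*s7)) (mkC (1/2) (-1/2*s7)) (mkC (-1) (0)) (mkC (-1/2) (-1/2*s7)) (mkC (-3/2) (-1/2*s7)) (mkC (1/2) (1/2*s7))).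
Lemma M1_eq : Mmul G3inv G1 = M1.
Proof. unfold M1. mmexp. Qed.
Lemma M2_eq : Mmul G1inv M1 = M2.
Proof. unfold M1, M2. mmexp. Qed.
Lemma G2_eq : G2 = G2mat.
Proof. unfold G2. rewrite M1_eq, M2_eq. unfold M2, G2mat. mmexp. Qed.

Lemma herm_scale (c : Defs.C) (Z W : V3) : herm (Vscale c Z) W = Cmul c (herm Z W).
Proof. destruct Z, W. unfold herm, Vscale, Cadd3; simpl. ring. Qed.
Lemma Cnorm2_mul (c z : Defs.C) : Cnorm2 (Cmul c z) = Cnorm2 c * Cnorm2 z.
Proof. destruct c, z. unfold Cnorm2, Cmul; simpl. ring. Qed.
Lemma fj_scale (n : nat) (c : Defs.C) (Z : V3) : fj n (Vscale c Z) = Cnorm2 c * fj n Z.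
Proof.
  destruct n.
  - destruct c as [cr ci], Z as [[] [] []]. unfold fj, herm, Vscale, Cadd3, Cadd, Cmul, Cconj, Cnorm2; simpl. ring.
  - rewrite !fj_S, !herm_scale, !Cnorm2_mul. ring.
Qed.
Lemma Cnorm2_pos (c : Defs.C) : c <> C0 -> 0 < Cnorm2 c.
Proof.
  destruct c as [a b]. unfold Cnorm2, C0; simpl. intros H.
  destruct (Req_dec a 0); destruct (Req_dec b 0); subst; try (exfalso; apply H; reflexivity); nra.
Qed.

Lemma P2_nonzero : Vnonzero P2.
Proof. unfold Vnonzero, P2, C0; simpl. intros [H _]. injection H. lra. Qed.

Lemma P2_fixed : Mapp G2 P2 = Vscale C1 P2.
Proof.
  rewrite G2_eq. unfold Mapp, G2mat, P2, Vscale, Cadd3, Cadd, Cmul, C1; simpl.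
  f_equal; try apply C_ext; simpl; try s7ring.
Qed.

Lemma fixed_unique (Z : V3) : Vnonzero Z -> fj 0 Z < 0 -> proj_fixed G2 Z -> proj_eq P2 Z.
Proof.
  intros Hnz Hf0 [l Hl]. rewrite G2_eq in Hl.
  destruct Z as [[a1 b1] [a2 b2] [a3 b3]]. destruct l as [lr li].
  unfold Mapp, G2mat, Vscale, Cadd3, Cadd, Cmul in Hl; simpl in Hl.
  injection Hl as H1r H1i H2r H2i H3r H3i.
  unfold fj, herm, Cadd3, Cadd, Cmul, Cconj in Hf0; simpl in Hf0.
  assert (Hz3 : a3*a3 + b3*b3 <> 0).
  { intros E. assert (a3 = 0) by nra. assert (b3 = 0) by nra. subst a3 b3.
    assert (a1 = 0) by lra. assert (b1 = 0) by lra. subst a1 b1.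
    assert (Ha2 : 3/2*a2 + 1/2*s7*b2 = 0) by lra.
    assert (Hb2 : 3/2*b2 - 1/2*s7*a2 = 0) by lra.
    assert (E2 : (a2*a2+b2*b2)*4 = 0).
    { assert (E3 : (a2*a2+b2*b2)*4 = (3/2*a2 + 1/2*s7*b2)*(3/2*a2 + 1/2*s7*b2) + (3/2*b2 - 1/2*s7*a2)*(3/2*b2 - 1/2*s7*a2)) by s7ring.
      rewrite E3, Ha2, Hb2. ring. }
    apply Hnz. unfold C0; simpl. repeat split; f_equal; nra. }
  set (z1 := mkC a1 b1). set (z2 := mkC a2 b2). set (z3 := mkC a3 b3). set (l := mkC lr li).
  set (b := mkC (3/2) (-1/2*s7)). set (bp := mkC (-3/2) (-1/2*s7)).
  set (two := Cadd C1 C1).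
  assert (E1 : Cadd3 (Cmul two z1) (Cmul b z2) (Copp z3) = Cmul l z1).
  { apply C_ext; simpl; lra. }
  assert (E2 : Csub (Cmul bp z1) z2 = Cmul l z2).
  { apply C_ext; simpl; lra. }
  assert (E3 : Copp z1 = Cmul l z3).
  { apply C_ext; simpl; lra. }
  assert (K : Cadd (Cmul b bp) (Cadd two two) = C0).
  { apply C_ext; simpl; s7ring. }
  assert (Hcub : Cmul z3 (Cmul (Csub l C1) (Cadd (Cmul l l) C1)) = C0).
  { assert (Id : Cmul z3 (Cmul (Csub l C1) (Cadd (Cmul l l) C1)) =
       Cadd (Cadd (Cmul (Cadd C1 l) (Csub (Cadd3 (Cmul two z1) (Cmul b z2) (Copp z3)) (Cmul l z1)))
                  (Cmul (Csub (Cmul (Csub two l) (Cadd C1 l)) (Cadd two two)) (Csub (Copp z1) (Cmul l z3))))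
            (Cadd (Copp (Cmul (Cadd (Cmul b bp) (Cadd two two)) z1))
                  (Cmul b (Csub (Csub (Cmul bp z1) z2) (Cmul l z2))))) by (unfold two, Cadd3; ring).
    rewrite Id, E1, E2, E3, K. ring. }
  apply Cmul_eq0 in Hcub. destruct Hcub as [Hc|Hc].
  { exfalso. apply Hz3. unfold z3, C0 in Hc. injection Hc as -> ->. ring. }
  apply Cmul_eq0 in Hc. destruct Hc as [Hc|Hc].
  -
    unfold l, Csub, C1, Copp, Cadd in Hc; simpl in Hc. injection Hc as Hlr Hli.
    assert (lr = 1) by lra. assert (li = 0) by lra. subst lr li.
    assert (a1 = -a3) by lra. assert (b1 = -b3) by lra. subst a1 b1.
    exists (mkC (-a3/2) (-b3/2)). split.
    + intros Hc. injection Hc as Ha Hb. apply Hz3. assert (a3 = 0) by lra. assert (b3 = 0) by lra. subst. ring.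
    + unfold Vscale, P2, Cmul; simpl. f_equal; apply C_ext; simpl; lra.
  -
    exfalso. unfold l, Cmul, Cadd, C1, C0 in Hc; simpl in Hc. injection Hc as Hr Hi.
    assert (lr = 0) by nra. subst lr.
    assert (a1 = li*b3) by lra. assert (b1 = -li*a3) by lra. subst a1 b1.
    nra.
Qed.
Lemma K_ident (X Y P R s : R) : X*X+Y*Y=1 -> P*P+R*R=1 -> s*s=7 ->
  ((-1 + P - X + (X*P+Y*R)) + s*(R-Y+(X*R-Y*P)))^2 = 4*(1+X)*(1-(X*P+Y*R))*(4+3*P-s*R).
Proof. intros H1 H2 H3.
  assert (E: ((-1 + P - X + (X*P+Y*R)) + s*(R-Y+(X*R-Y*P)))^2 - 4*(1+X)*(1-(X*P+Y*R))*(4+3*P-s*R)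
   = (s*s -2*R*s + R*R + 2*P*s*s -2*P*R*s + P*P*s*s)*(Y*Y+X*X-1)
   + (1 + s*s -2*Y*s + 2*X*s*s -2*X*Y*s - X*X + X*X*s*s)*(R*R+P*P-1)
   + (2 + 2*P -2*Y*R -2*Y*P*R + 2*X -2*X*P*P -2*X*Y*R -2*X*Y*P*R -2*X*X*P -2*X*X*P*P)*(s*s-7)) by ring.
  assert (Y*Y+X*X-1=0) by lra. assert (R*R+P*P-1=0) by lra. assert (s*s-7=0) by lra.
  rewrite H, H0, H4 in E. lra. Qed.

Lemma key_real (X Y P R s : R) : X*X+Y*Y=1 -> P*P+R*R=1 -> s*s=7 -> 0 < s ->
  3/2 + X - P + (X*P+Y*R)/2 <= 0 ->
  -3/4 + P/4 - 5/4*X + 3/4*(X*P+Y*R) + s/4*(R - Y + (X*R-Y*P)) <= 0 ->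
  -1/4 - P/4 - 3/4*X + (X*P+Y*R)/4 + s/4*(Y - R - (X*R-Y*P)) <= 0 ->
  X = -1 /\ Y = 0 /\ P = 1 /\ R = 0.
Proof.
  intros H1 H2 H3 Hs h0 h3 h10.
  pose proof (K_ident X Y P R s H1 H2 H3) as KI.
  set (C := X*P+Y*R) in *. set (D := X*R-Y*P) in *.
  assert (CD : C*C + D*D = 1).
  { unfold C, D. replace ((X*P+Y*R)*(X*P+Y*R) + (X*R-Y*P)*(X*R-Y*P)) with ((X*X+Y*Y)*(P*P+R*R)) by ring.
    rewrite H1, H2. ring. }
  assert (Cge : -1 <= C) by nra.
  assert (Cle : C <= 1) by nra.
  assert (Xge : -1 <= X) by nra.
  assert (Pge : -1 <= P) by nra.
  assert (Ple : P <= 1) by nra.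
  set (K4 := (-1 + P - X + C) + s*(R-Y+D)) in *.
  set (M := 1/2 + X - C/2).
  assert (HK1 : K4 <= 4*M) by (unfold K4, M; lra).
  assert (HK2 : - K4 <= 4*M) by (unfold K4, M; lra).
  assert (HM0 : 0 <= M) by lra.
  assert (HM1 : M <= 1 + X) by (unfold M; lra).
  assert (KK : K4^2 <= 16*(1+X)^2).
  { assert (K4^2 <= (4*M)^2) by nra. assert ((4*M)^2 <= 16*(1+X)^2) by nra. lra. }
  assert (HL : 5/4 + 9/4*P <= 4+3*P-s*R).
  { assert (A : 0 < 11/4 + 3/4*P) by lra.
    assert (B : (s*R)^2 <= (11/4+3/4*P)^2).
    { replace ((s*R)^2) with (7*(1-P*P)) by (rewrite <- H3; nra).
      assert (0 <= (3/4 + 11/4*P)^2) by nra. nra. }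
    assert (s*R <= 11/4 + 3/4*P) by nra. lra. }
  assert (HP : 1 + X <= P) by lra.
  set (T := 1 + X) in *.
  assert (HT0 : 0 <= T) by (unfold T; lra).
  assert (HT1 : T <= 1) by (unfold T; lra).
  assert (Ha1 : 1 - T <= (1-C)/2) by (unfold T, M in *; lra).
  assert (Ha2 : T <= (1-C)/2) by (unfold T; lra).
  assert (T = 0).
  { destruct (Req_dec T 0) as [E|E]; [exact E|exfalso].
    assert (HTp : 0 < T) by lra.
    set (a := (1-C)/2) in *. set (L := 4+3*P-s*R) in *.
    assert (KI2 : K4^2 = 8*T*a*L) by (rewrite KI; unfold a; field).
    assert (HLb : 5/4 + 9/4*T <= L) by lra.
    assert (Hbig : 2*T < a*L).
    { destruct (Rle_lt_dec T (1/2)).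
      - assert (a*L >= (1-T)*(5/4+9/4*T)) by nra. nra.
      - assert (a*L >= T*(5/4+9/4*T)) by nra. nra. }
    nra. }
  assert (X = -1) by (unfold T in *; lra).
  subst X. assert (Y = 0) by nra. subst Y.
  assert (P = 1) by (unfold C, M in *; lra). subst P.
  split; [reflexivity|split; [reflexivity|split; [reflexivity|nra]]].
Qed.

Lemma gamma10Q : Mapp (gamma 10) Q = G1m (-1) (mkV C0 C0 (mkC (-1) 0)).
Proof.
  replace 10%nat with (8*1+2)%nat by reflexivity.
  rewrite gamma_8k by lia. rewrite !Mapp_Mmul, Mpow_G1, G1m_Q, Mpow_G1inv.
  simpl gbase. rewrite G2invQ. simpl INR. reflexivity.
Qed.

Ltac fexp_h := unfold Cnorm2, herm, G1m, Rs, Q, Cadd3, Cadd, Cmul, Cconj, cA, cB, cBbar, C0, C1, Cm1, Copp in *; simpl in *.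
Ltac conv H t := match type of H with
 | ?a <= 0 => let E := fresh in assert (E : a = t) by s7ring; rewrite E in H; clear E
 | ?a = 0 => let E := fresh in assert (E : a = t) by s7ring; rewrite E in H; clear E
 end.
Ltac fexp := unfold Cnorm2, herm, G1m, Rs, Q, Cadd3, Cadd, Cmul, Cconj, cA, cB, cBbar, C0, C1, Cm1, Copp; simpl.

Lemma norm_lemma (X Y v1 v2 : R) :
  let Z := mkV (mkC X Y) (mkC v1 v2) C1 in
  fj 0 Z <= 0 -> fj 1 Z = 0 -> fj 2 Z = 0 -> fj 3 Z <= 0 -> fj 10 Z <= 0 ->
  X = -1 /\ Y = 0 /\ v1 = 3/4 /\ v2 = s7/4.
Proof.
  intros Z H0 H1 H2 H3 H10. unfold Z in *.
  rewrite fj_S in H1, H2, H3, H10.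
  rewrite gamma10Q in H10.
  change (gamma 1) with G2 in H1. rewrite G2Q in H1.
  change (gamma 2) with G2inv in H2. rewrite G2invQ in H2.
  change (gamma 3) with G3 in H3. rewrite G3Q in H3.
  destruct (ex_intro (fun P => P = -X - 3/2*v1 - s7/2*v2 + 2) _ eq_refl) as [P HP].
  destruct (ex_intro (fun R => R = -Y + s7/2*v1 - 3/2*v2) _ eq_refl) as [R HR].
  assert (Hv1 : v1 = (-3*(P+X-2) + s7*(R+Y))/8) by (rewrite HP, HR; s7ring).
  assert (Hv2 : v2 = (-s7*(P+X-2) - 3*(R+Y))/8) by (rewrite HP, HR; s7ring).
  clear HP HR. subst v1 v2.
  pose proof s7_sq as S2. pose proof s7_pos as Sp.
  unfold fj in H0. fexp_h.
  conv H0 (3/2 + X - P + (X*P+Y*R)/2 + 1/4*(X*X+Y*Y-1) + 1/4*(P*P+R*R-1)).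
  conv H1 (1 - (P*P+R*R)).
  conv H2 (1 - (X*X+Y*Y)).
  conv H3 (-3/4 + P/4 - 5/4*X + 3/4*(X*P+Y*R) + s7/4*(R - Y + (X*R-Y*P)) - 1/4*(P*P+R*R-1) - (X*X+Y*Y-1)).
  conv H10 (-1/4 - P/4 - 3/4*X + (X*P+Y*R)/4 + s7/4*(Y - R - (X*R-Y*P)) - 1/4*(P*P+R*R-1) - 1/2*(X*X+Y*Y-1)).
  assert (C1' : X*X+Y*Y = 1) by lra. assert (C2' : P*P+R*R = 1) by lra.
  rewrite C1', C2' in *.
  destruct (key_real X Y P R s7 C1' C2' S2 Sp) as [-> [-> [-> ->]]]; try lra.
  all: split; [reflexivity|split; [reflexivity|split; field]].
Qed.

Definition Cinv (z : Defs.C) : Defs.C := mkC (re z / Cnorm2 z) (- im z / Cnorm2 z).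
Lemma Cinv_r (z : Defs.C) : z <> C0 -> Cmul z (Cinv z) = C1.
Proof.
  intros H. pose proof (Cnorm2_pos z H) as Hp.
  destruct z as [a b]. unfold Cinv, Cmul, C1, Cnorm2 in *; simpl in *.
  apply C_ext; simpl; field; lra.
Qed.
Lemma Cinv_nz (z : Defs.C) : z <> C0 -> Cinv z <> C0.
Proof.
  intros H E. pose proof (Cinv_r z H) as H1. rewrite E in H1.
  unfold Cmul, C0, C1 in H1. injection H1. intros. lra.
Qed.

Lemma Fbar_P2 (Z : V3) : Fbar_ J12 Z -> proj_eq P2 Z.
Proof.
  intros [Hnz [HJ HK]].
  assert (H0 : fj 0 Z <= 0) by (apply HK; unfold compl, J12; lia).
  assert (H1 : fj 1 Z = 0) by (apply HJ; unfold J12; lia).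
  assert (H2 : fj 2 Z = 0) by (apply HJ; unfold J12; lia).
  assert (H3 : fj 3 Z <= 0) by (apply HK; unfold compl, J12; lia).
  assert (H10 : fj 10 Z <= 0) by (apply HK; unfold compl, J12; lia).
  clear HJ HK.
  destruct Z as [z1 z2 z3].
  assert (Hz3 : z3 <> C0).
  { intros E. subst z3.
    rewrite fj_S in H2. change (gamma 2) with G2inv in H2. rewrite G2invQ in H2.
    destruct z1 as [a1 b1], z2 as [a2 b2].
    unfold fj in H0. fexp_h.
    assert (a1 = 0) by nra. assert (b1 = 0) by nra. subst a1 b1.
    assert (a2 = 0) by nra. assert (b2 = 0) by nra. subst a2 b2.
    apply Hnz. unfold C0. auto. }
  set (ci := Cinv z3).
  assert (Hci : ci <> C0) by (apply Cinv_nz; auto).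
  pose proof (Cnorm2_pos ci Hci) as Hpos.
  assert (Hz3ci : Cmul ci z3 = C1).
  { unfold ci. transitivity (Cmul z3 (Cinv z3)); [ring|apply Cinv_r; auto]. }
  assert (EZ : Vscale ci (mkV z1 z2 z3) =
     mkV (mkC (re (Cmul ci z1)) (im (Cmul ci z1))) (mkC (re (Cmul ci z2)) (im (Cmul ci z2))) C1).
  { unfold Vscale; simpl. rewrite Hz3ci. f_equal; apply C_ext; reflexivity. }
  assert (G0 : fj 0 (Vscale ci (mkV z1 z2 z3)) <= 0) by (rewrite fj_scale; nra).
  assert (G1 : fj 1 (Vscale ci (mkV z1 z2 z3)) = 0) by (rewrite fj_scale, H1; ring).
  assert (G2 : fj 2 (Vscale ci (mkV z1 z2 z3)) = 0) by (rewrite fj_scale, H2; ring).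
  assert (G3 : fj 3 (Vscale ci (mkV z1 z2 z3)) <= 0) by (rewrite fj_scale; nra).
  assert (G10 : fj 10 (Vscale ci (mkV z1 z2 z3)) <= 0) by (rewrite fj_scale; nra).
  rewrite EZ in G0, G1, G2, G3, G10.
  destruct (norm_lemma _ _ _ _ G0 G1 G2 G3 G10) as [Ea [Eb [Ec Ed]]].
  assert (Ew1 : Cmul ci z1 = mkC (-1) 0) by (apply C_ext; simpl; [rewrite <- Ea|rewrite <- Eb]; reflexivity).
  assert (Ew2 : Cmul ci z2 = mkC (3/4) (s7/4)) by (apply C_ext; simpl; [rewrite <- Ec|rewrite <- Ed]; reflexivity).
  assert (Ez1 : z1 = Cmul z3 (mkC (-1) 0)).
  { rewrite <- Ew1. transitivity (Cmul (Cmul ci z3) z1); [rewrite Hz3ci; ring | ring]. }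
  assert (Ez2 : z2 = Cmul z3 (mkC (3/4) (s7/4))).
  { rewrite <- Ew2. transitivity (Cmul (Cmul ci z3) z2); [rewrite Hz3ci; ring | ring]. }
  exists (Cmul z3 (mkC (-1/2) 0)). split.
  - intros E. apply Cmul_eq0 in E. destruct E as [E|E]; [auto|].
    unfold C0 in E. injection E. intros. lra.
  - rewrite Ez1, Ez2. destruct z3 as [a3 b3]. unfold Vscale, P2, Cmul; simpl.
    f_equal; apply C_ext; simpl; field.
Qed.

Lemma proj_cases (Z : V3) : proj_eq P2 Z -> forall n,
  (J123_5_10_11 n /\ fj n Z = 0) \/ (~ J123_5_10_11 n /\ fj n Z < 0).
Proof.
  intros [c [Hc ->]] n. rewrite fj_scale. pose proof (Cnorm2_pos c Hc).
  destruct (fjP2_cases n) as [[HJ E]|[HJ E]].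
  - left. split; auto. rewrite E. ring.
  - right. split; auto. nra.
Qed.

Lemma J12_sub (n : nat) : J12 n -> J123_5_10_11 n.
Proof. unfold J12, J123_5_10_11. lia. Qed.

Theorem proposition5p4 :
  (* F_{1,2} is empty *)
  (forall Z : V3, ~ F_ J12 Z) /\
  (* p2 = [P2] is the unique fixed point of G2 in H^2_C = {<Z,Z> < 0} ... *)
  exists P2 : V3,
    Vnonzero P2 /\ fj 0%nat P2 < 0 /\ proj_fixed G2 P2 /\
    (forall Z : V3, Vnonzero Z -> fj 0%nat Z < 0 -> proj_fixed G2 Z -> proj_eq P2 Z) /\
    (* ... and Fbar_{1,2} = F_{1,2,3,5,10,11} = {p2} *)
    (forall Z : V3, Fbar_ J12 Z <-> F_ J123_5_10_11 Z) /\
    (forall Z : V3, Fbar_ J12 Z <-> (Vnonzero Z /\ proj_eq P2 Z)).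
Proof.
  split.
  { intros Z [Hnz [HJ HK]].
    assert (Hb : Fbar_ J12 Z).
    { split; [auto|split; [auto|]]. intros i Hi. apply Rlt_le. auto. }
    pose proof (Fbar_P2 Z Hb) as Hp.
    destruct (proj_cases Z Hp 3) as [[_ E]|[HJ3 _]].
    - assert (fj 3 Z < 0) by (apply HK; unfold compl, J12; lia). lra.
    - apply HJ3. unfold J123_5_10_11. lia. }
  exists P2. split; [apply P2_nonzero|].
  split; [rewrite fjP2_0; lra|].
  split; [exists C1; apply P2_fixed|].
  split; [apply fixed_unique|].
  split.
  - intros Z. split.
    + intros Hb. pose proof (Fbar_P2 Z Hb) as Hp. destruct Hb as [Hnz _].
      split; [auto|split].
      * intros j Hj. destruct (proj_cases Z Hp j) as [[_ E]|[HJ _]]; [auto|contradiction].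
      * intros i Hi. destruct (proj_cases Z Hp i) as [[HJ _]|[_ E]]; [contradiction|auto].
    + intros [Hnz [HJ HK]]. split; [auto|split].
      * intros j Hj. apply HJ. apply J12_sub. auto.
      * intros i Hi. destruct (classic (J123_5_10_11 i)) as [Hc|Hc].
        -- rewrite (HJ i Hc). lra.
        -- apply Rlt_le. apply HK. exact Hc.
  - intros Z. split.
    + intros Hb. split; [destruct Hb; auto|]. apply Fbar_P2. auto.
    + intros [Hnz Hp]. split; [auto|split].
      * intros j Hj. destruct (proj_cases Z Hp j) as [[_ E]|[HJ _]]; [auto|].
        exfalso. apply HJ. apply J12_sub. auto.
      * intros i Hi. destruct (proj_cases Z Hp i) as [[_ E]|[_ E]]; lra.
Qed.
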